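(* Let $K_1\subsetneq K_2$ be fields and $R=K_1+xK_2[x]$ (polynomials over $K_2$ with constant term in $K_1$). Then $R$ is atomic, for every $a\in K_2\setminus\{0\}$ the element $ax$ is irreducible in $R$ but not absolutely irreducible, $R$ has prime elements, and every absolutely irreducible element of $R$ is prime.
   Context: For an integral domain $R$, factorization notions refer to the monoid $(R\setminus\{0\},\cdot)$. $R$ is atomic if every non-zero non-unit is a product of irreducibles. Two factorizations into irreducibles $a_1\cdots a_n=b_1\cdots b_m$ of the same element are essentially the same if $n=m$ and, after re-indexing, $a_j$ and $b_j$ are associated for all $j$. An irreducible $r$ is absolutely irreducible if for every $n\in\mathbb N$, every factorization of $r^n$ into irreducibles is essentially the same as $r^n=r\cdots r$. *)

(* Defs.v *)
From HB Require Import structures.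
From mathcomp Require Import all_boot all_order all_algebra.
Set Implicit Arguments. Unset Strict Implicit. Unset Printing Implicit Defensive.
Import Order.TTheory GRing.Theory.
Local Open Scope ring_scope.

(* The ring R = K1 + x K2[x] is modelled as the subset of {poly K2}
   consisting of the polynomials whose constant term lies in K1. *)
Section FactR.
Variables (K2 : fieldType) (K1 : {pred K2}).

Definition memR (p : {poly K2}) : Prop := p`_0 \in K1.

Definition unitR (u : {poly K2}) : Prop :=
  memR u /\ exists v, memR v /\ u * v = 1.

Definition assocR (a b : {poly K2}) : Prop :=
  exists u, unitR u /\ a = u * b.

Definition dvdR (a b : {poly K2}) : Prop :=
  exists c, memR c /\ b = a * c.

Definition irrR (r : {poly K2}) : Prop :=
  [/\ memR r, r != 0, ~ unitR r &
      forall a b, memR a -> memR b -> r = a * b -> unitR a \/ unitR b].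

Definition primeR (p : {poly K2}) : Prop :=
  [/\ memR p, p != 0, ~ unitR p &
      forall a b, memR a -> memR b -> dvdR p (a * b) -> dvdR p a \/ dvdR p b].

Definition irr_seqR (s : seq {poly K2}) : Prop :=
  forall q, q \in s -> irrR q.

Definition atomicR : Prop :=
  forall r, memR r -> r != 0 -> ~ unitR r ->
    exists s, irr_seqR s /\ r = \prod_(q <- s) q.

Definition ess_sameR (s t : seq {poly K2}) : Prop :=
  exists t', perm_eq t t' /\ size s = size t' /\
    forall i, (i < size s)%N -> assocR (nth 0 s i) (nth 0 t' i).

Definition abs_irrR (r : {poly K2}) : Prop :=
  irrR r /\
  forall (n : nat) (s : seq {poly K2}),
    irr_seqR s -> \prod_(q <- s) q = r ^+ n -> ess_sameR s (nseq n r).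
End FactR.

(* Main.v *)
Require Import Defs.
From HB Require Import structures.
From mathcomp Require Import all_boot all_order all_algebra.
From Stdlib Require Import Classical.
From mathcomp Require Import zify.
Import GRing.Theory.
Local Open Scope ring_scope.

Section Aux.
Variables (K2 : fieldType) (K1 : divringClosed K2).

Lemma unitR_size (u : {poly K2}) : unitR K1 u -> size u = 1%N.
Proof.
case=> _ [v [_ uv]].
have : u \is a GRing.unit by apply/unitrP; exists v; rewrite mulrC uv.
by rewrite poly_unitE => /andP[/eqP -> _].
Qed.

Lemma size1_unitR (u : {poly K2}) : memR K1 u -> size u = 1%N -> unitR K1 u.
Proof.
move=> Hu s1.
have Eu : u = (u`_0)%:P by apply/size1_polyC; rewrite s1.
have nz : u`_0 != 0.
  have : lead_coef u != 0 by rewrite lead_coef_eq0 -size_poly_eq0 s1.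
  by rewrite lead_coefE s1.
split => //; exists (u`_0)^-1%:P; split.
  by rewrite /memR coefC /= rpredV.
by rewrite {1}Eu -polyCM mulfV.
Qed.

Lemma nz_size (u : {poly K2}) : u != 0 -> size u != 1%N -> (1 < size u)%N.
Proof.
move=> /negPf; rewrite -size_poly_eq0.
by case: (size u) => [|[|n]].
Qed.

Lemma irr_size2 (r : {poly K2}) : memR K1 r -> size r = 2%N -> irrR K1 r.
Proof.
move=> Hr s2.
have rnz : r != 0 by rewrite -size_poly_eq0 s2.
split => //.
  by move/unitR_size; rewrite s2.
move=> a b Ha Hb E.
have anz : a != 0 by apply: contraNneq rnz => a0; rewrite E a0 mul0r.
have bnz : b != 0 by apply: contraNneq rnz => b0; rewrite E b0 mulr0.
have := size_mul anz bnz; rewrite -E s2 => Hs.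
have Sa : (0 < size a)%N by rewrite size_poly_gt0.
have Sb : (0 < size b)%N by rewrite size_poly_gt0.
case: (eqVneq (size a) 1%N) => [sa1|sa1]; first by left; apply: size1_unitR.
right; apply: size1_unitR => //.
rewrite -subn1 in Hs.
move: Sa Sb sa1 Hs; move: (size a) (size b) => m n; rewrite -!(rwP eqP) =>  *; lia.
Qed.

Lemma scaleX_mem (a : K2) : memR K1 (a *: 'X).
Proof. by rewrite /memR coefZ coefX mulr0 rpred0. Qed.

Lemma scaleX_irr (a : K2) : a != 0 -> irrR K1 (a *: 'X).
Proof. move=> anz; apply: irr_size2; first exact: scaleX_mem. by rewrite size_scale // size_polyX. Qed.

Lemma scaleX_not_abs (a b : K2) : a != 0 -> b \notin K1 -> ~ abs_irrR K1 (a *: 'X).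
Proof.
move=> anz bK [_ H].
have bnz : b != 0 by apply: contraNneq bK => ->; exact: rpred0.
pose s := [:: (a*b) *: 'X; (a/b) *: 'X].
have Hs : irr_seqR K1 s.
  move=> q; rewrite !inE => /orP[]/eqP ->; apply: scaleX_irr;
    by rewrite ?mulf_neq0 ?invr_eq0.
have Hp : \prod_(q <- s) q = (a *: 'X)^+2.
  rewrite !big_cons big_nil mulr1 expr2 -!scalerAl -!scalerAr !scalerA.
  congr (_ *: _); by rewrite mulrACA mulfV // mulr1.
have [t' [pt [sz Ha]]] := H 2%N s Hs Hp.
have t0 : nth 0 t' 0 = a *: 'X.
  have : nth 0 t' 0 \in t' by apply: mem_nth; rewrite -sz.
  by rewrite -(perm_mem pt) mem_nseq => /eqP.
have [u [uU]] := Ha 0%N isT; rewrite t0 /= => E.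
have Eu : u = (u`_0)%:P by apply/size1_polyC; rewrite (@unitR_size u uU).
move: E; rewrite Eu mul_polyC scalerA => E.
have := congr1 (fun p : {poly K2} => p`_1) E; rewrite /= !coefZ coefX /= !mulr1 => E1.
apply: (negP bK); have -> : b = u`_0 by apply: (mulfI anz); rewrite E1 mulrC.
by case: uU.
Qed.

Lemma irr_dvd (r q : {poly K2}) : irrR K1 r -> r`_0 != 0 ->
  q %| r -> size q != 1%N -> r %| q.
Proof.
move=> [Hr rnz _ Hirr] r0 qr sq.
have Er : r = (r %/ q) * q by rewrite divpK.
move: Er; set d := r %/ q => Er.
have qnz : q != 0 by apply: contraNneq rnz => q0; rewrite Er q0 mulr0.
case: (eqVneq (size d) 1%N) => [sd|sd].
  have Ed : d = (d`_0)%:P by apply/size1_polyC; rewrite sd.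
  have d0 : d`_0 != 0.
    have : lead_coef d != 0 by rewrite lead_coef_eq0 -size_poly_eq0 sd.
    by rewrite lead_coefE sd.
  move: Ed d0 Er; move: (d`_0) => c -> c0 Er.
  have -> : q = c^-1%:P * r by rewrite Er mulrA -polyCM mulVf // mul1r.
  by apply: dvdp_mull (dvdpp r).
have dnz : d != 0 by apply: contraNneq rnz => d0; rewrite Er d0 mul0r.
have r0' : r`_0 = d`_0 * q`_0 by rewrite Er coef0M.
have q0 : q`_0 != 0 by apply: contraNneq r0 => q0; rewrite r0' q0 mulr0.
have [] := Hirr ((q`_0)^-1 *: q) (q`_0 *: d).
- by rewrite /memR coefZ mulVf // rpred1.
- by rewrite /memR coefZ mulrC -r0'.
- by rewrite -scalerAl -scalerAr scalerA mulVf // scale1r Er mulrC.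
- by move/unitR_size; rewrite size_scale ?invr_eq0 // => E; rewrite E in sq.
- by move/unitR_size; rewrite size_scale // => E; rewrite E in sd.
Qed.

Lemma poly_prime (r a b : {poly K2}) :
  (forall q, q %| r -> size q != 1%N -> r %| q) ->
  r %| a * b -> (r %| a) || (r %| b).
Proof.
move=> Hq rab; case ra: (r %| a) => //=.
have cop : coprimep r a.
  rewrite /coprimep; apply/negPn/negP => sg.
  have := Hq _ (dvdp_gcdl r a) sg => rg.
  by rewrite (dvdp_trans rg (dvdp_gcdr r a)) in ra.
by rewrite -(Gauss_dvdpr b cop).
Qed.

Lemma irr_prime (r : {poly K2}) : irrR K1 r -> r`_0 != 0 -> primeR K1 r.
Proof.
move=> Hi r0; have [Hr rnz nu _] := Hi; split => // a b Ha Hb [c [_ E]].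
have rab : r %| a * b by rewrite E dvdp_mulIl.
have key : forall x, memR K1 x -> r %| x -> dvdR K1 r x.
  move=> x Hx rx; exists (x %/ r); split; last by rewrite mulrC divpK.
  have Ex : x`_0 = (x %/ r)`_0 * r`_0 by rewrite -coef0M divpK.
  rewrite /memR; have -> : (x %/ r)`_0 = x`_0 / r`_0 by rewrite Ex mulfK.
  by rewrite rpredM ?rpredV.
have := @poly_prime r a b (fun q => @irr_dvd r q Hi r0) rab.
by case/orP => ?; [left|right]; apply: key.
Qed.

Lemma atomic : atomicR K1.
Proof.
move=> r; move: {2}(size r) (leqnn (size r)) => n; elim: n r => [|n IH] r.
  by rewrite leqn0 size_poly_eq0 => /eqP -> _ /eqP.
move=> Sr Hr rnz nu.
case: (classic (irrR K1 r)) => [ir|nir].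
  exists [:: r]; split; last by rewrite big_seq1.
  by move=> q; rewrite inE => /eqP ->.
have : ~ (forall a b, memR K1 a -> memR K1 b -> r = a * b -> unitR K1 a \/ unitR K1 b).
  by move=> H; apply: nir; split.
move/not_all_ex_not => [a /not_all_ex_not [b H]].
have [Ha H1] := imply_to_and _ _ H.
have [Hb H2] := imply_to_and _ _ H1.
have [E nab] := imply_to_and _ _ H2.
have anz : a != 0 by apply: contraNneq rnz => a0; rewrite E a0 mul0r.
have bnz : b != 0 by apply: contraNneq rnz => b0; rewrite E b0 mulr0.
have nua : ~ unitR K1 a by tauto.
have nub : ~ unitR K1 b by tauto.
have sa : size a != 1%N by apply/negP => /eqP /(@size1_unitR a Ha).
have sb : size b != 1%N by apply/negP => /eqP /(@size1_unitR b Hb).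
have Hs := size_mul anz bnz; rewrite -E in Hs.
have Sa : (0 < size a)%N by rewrite size_poly_gt0.
have Sb : (0 < size b)%N by rewrite size_poly_gt0.
rewrite -subn1 in Hs.
have la : (size a <= n)%N.
  move: Sa Sb sa sb Hs Sr; move: (size a) (size b) (size r) => x y z.
  rewrite -!(rwP eqP) => *; lia.
have lb : (size b <= n)%N.
  move: Sa Sb sa sb Hs Sr; move: (size a) (size b) (size r) => x y z.
  rewrite -!(rwP eqP) => *; lia.
have [sA [IA PA]] := IH a la Ha anz nua.
have [sB [IB PB]] := IH b lb Hb bnz nub.
exists (sA ++ sB); split; last by rewrite big_cat -PA -PB E.
by move=> q; rewrite mem_cat => /orP[]; [apply: IA|apply: IB].
Qed.

End Aux.

Theorem mainTheorem6 (K2 : fieldType) (K1 : divringClosed K2)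
  (properK : exists a : K2, a \notin K1) :
  [/\ atomicR K1,
      (forall a : K2, a != 0 ->
         irrR K1 (a *: 'X) /\ ~ abs_irrR K1 (a *: 'X)),
      (exists p : {poly K2}, primeR K1 p) &
      (forall r : {poly K2}, abs_irrR K1 r -> primeR K1 r)].
Proof.
move: properK => [b bK]; split.
- exact: atomic.
- move=> a anz; split; [exact: scaleX_irr | exact: scaleX_not_abs anz bK].
- exists ('X - 1%:P); apply: irr_prime.
    apply: irr_size2; last by rewrite size_XsubC.
    by rewrite /memR coefB coefX coefC /= sub0r rpredN rpred1.
  by rewrite coefB coefX coefC /= sub0r oppr_eq0 oner_eq0.
- move=> r Hr; have Hi := Hr.1.
  case: (eqVneq r`_0 0) => [r0|r0]; last exact: irr_prime.
  exfalso.
  have : root r 0 by rewrite /root horner_coef0 r0.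
  case/factor_theorem => g Eg; rewrite polyC0 subr0 in Eg.
  have [Hmem rnz nu Hirr] := Hi.
  have gnz : g != 0 by apply: contraNneq rnz => g0; rewrite Eg g0 mul0r.
  case: (eqVneq (size g) 1%N) => sg.
    have Eg' : g = (g`_0)%:P by apply/size1_polyC; rewrite sg.
    have g0 : g`_0 != 0.
      have : lead_coef g != 0 by rewrite lead_coef_eq0.
      by rewrite lead_coefE sg.
    apply: (@scaleX_not_abs _ _ _ b g0 bK).
    by rewrite -mul_polyC -Eg' -Eg.
  case: (eqVneq g`_0 0) => g0.
    have [] := Hirr g 'X _ _ Eg.
    + by rewrite /memR g0 rpred0.
    + by rewrite /memR coefX rpred0.
    + by move/unitR_size => E; rewrite E in sg.
    + by move/unitR_size; rewrite size_polyX.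
  have [] := Hirr ((g`_0)^-1 *: g) (g`_0 *: 'X).
  + by rewrite /memR coefZ mulVf // rpred1.
  + exact: scaleX_mem.
  + by rewrite Eg -scalerAl -scalerAr scalerA mulVf // scale1r.
  + by move/unitR_size; rewrite size_scale ?invr_eq0 // => E; rewrite E in sg.
  + by move/unitR_size; rewrite size_scale // size_polyX.
Qed.
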